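(* Let $k\ge1$ and $m\ge0$. The largest positive integer $n\in A_{2k}$ with $\max\mathcal{CG}(n)=F_{2k+2m}$ is $$F_{2k}+F_{2k+2}+\cdots+F_{2k+2m-2}+2F_{2k+2m}$$ (for $m=0$ this is $2F_{2k}$).
   Context: Fibonacci numbers: $F_1=F_2=1$, $F_{n+1}=F_n+F_{n-1}$ for $n\ge2$. Chung–Graham decomposition: every positive integer $n$ has a unique representation $n=\sum_{i\ge1}c_iF_{2i}$ with $c_i\in\{0,1,2\}$, only finitely many nonzero, such that whenever $c_i=c_j=2$ with $i<j$ there is $k$ with $i<k<j$ and $c_k=0$. Let $\mathcal{CG}(n)$ be the set of $F_{2i}$ with $c_i\neq0$. For $k\ge1$, $A_{2k}=\{n\ge1:\min\mathcal{CG}(n)=F_{2k}\}$. *)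

(* Defs.v *)
From mathcomp Require Import all_boot.
Set Implicit Arguments. Unset Strict Implicit. Unset Printing Implicit Defensive.

Fixpoint fib (n : nat) : nat :=
  match n with
  | 0 => 0
  | 1 => 1
  | (p.+1 as q).+1 => fib q + fib p
  end.

(* A coefficient list c = [:: c_1; c_2; ...]; cg_coef c i = c_i for i >= 1
   (and 0 beyond the list). *)
Definition cg_coef (c : seq nat) (i : nat) : nat := nth 0 c i.-1.

Definition cg_val (c : seq nat) : nat :=
  \sum_(1 <= i < (size c).+1) cg_coef c i * fib (2 * i).

Definition cg_admissible (c : seq nat) : Prop :=
  all (fun x => x <= 2) c /\
  forall i j, 1 <= i -> i < j -> cg_coef c i = 2 -> cg_coef c j = 2 ->
    exists k, i < k < j /\ cg_coef c k = 0.

Definition CG_rep (c : seq nat) (n : nat) : Prop :=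
  cg_admissible c /\ cg_val c = n.

Definition CG_set (c : seq nat) : seq nat :=
  [seq fib (2 * i) | i <- iota 1 (size c) & cg_coef c i != 0].

Definition is_min_of (a : nat) (s : seq nat) : Prop :=
  a \in s /\ all (fun x => a <= x) s.
Definition is_max_of (b : nat) (s : seq nat) : Prop :=
  b \in s /\ all (fun x => x <= b) s.

(* n >= 1, n in A_{2k} (min CG(n) = F_{2k}) and max CG(n) = F_{2k+2m}. *)
Definition in_A_with_max (k m n : nat) : Prop :=
  0 < n /\ exists c, CG_rep c n /\ is_min_of (fib (2 * k)) (CG_set c)
                                /\ is_max_of (fib (2 * k + 2 * m)) (CG_set c).

(* Main.v *)
Require Import Defs.
From mathcomp Require Import all_boot.
From mathcomp Require Import zify.

Lemma fibSS n : fib n.+2 = fib n.+1 + fib n.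
Proof. by []. Qed.

Lemma fib_pos2 n : 0 < fib n.+1 /\ 0 < fib n.+2.
Proof. elim: n => [|n [h1 h2]] //; split => //; rewrite fibSS; lia. Qed.

Lemma fib_pos n : 0 < fib n.+1.
Proof. by case: (fib_pos2 n). Qed.

Lemma fib_step n : 1 <= n -> fib n.+1 < fib n.+2.
Proof. case: n => // n _; rewrite [fib n.+3]fibSS; have := fib_pos n; lia. Qed.

Lemma fib_le_succ n : fib n <= fib n.+1.
Proof. case: n => // n; rewrite fibSS; lia. Qed.

Lemma fib_strict a b : 2 <= a -> a < b -> fib a < fib b.
Proof.
move=> Ha; elim: b => // b IH Hab.
have hb : 1 <= b.-1 by lia.
have := @fib_step _ hb. have -> : b.-1.+1 = b by lia.
case: (ltngtP a b) => [h|h|h].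
- have := IH h. lia.
- lia.
- subst b; lia.
Qed.

Lemma fib2_lt i j : 1 <= i -> i < j -> fib (2 * i) < fib (2 * j).
Proof. move=> h1 h2; apply: fib_strict; lia. Qed.

Definition S (c : seq nat) (j : nat) :=
  \sum_(1 <= i < j.+1) cg_coef c i * fib (2 * i).

Lemma S_succ c j : S c j.+1 = S c j + cg_coef c j.+1 * fib (2 * j.+1).
Proof. by rewrite /S big_nat_recr. Qed.

Lemma S_const c a b : a <= b -> (forall i, a < i <= b -> cg_coef c i = 0) ->
  S c b = S c a.
Proof.
elim: b => [|b IH] Hab Hz; first by have -> : a = 0 by lia.
case: (ltngtP a b.+1) => h; last by subst.
- rewrite S_succ (Hz b.+1) ?IH; first lia.
  + lia.
  + move=> i hi; apply: Hz; lia.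
  + lia.
- lia.
Qed.

Fixpoint freeb (c : seq nat) (j : nat) : bool :=
  match j with
  | 0 => true
  | j'.+1 => if cg_coef c j == 0 then true
             else if cg_coef c j == 2 then false else freeb c j'
  end.

Lemma lock_wit c j : ~~ freeb c j ->
  exists i, [/\ 1 <= i <= j, cg_coef c i = 2 &
            forall l, i < l <= j -> cg_coef c l <> 0].
Proof.
elim: j => [|j IH] //=.
case: eqP => // h0. case: eqP => h2 /= H.
  exists j.+1; split => //; lia.
have [i [hi hi2 hl]] := IH H.
exists i; split => //; first lia.
move=> l hl'. case: (ltngtP l j.+1) => e; [apply: hl; lia|lia|by subst].
Qed.

Lemma adm_free c j : cg_admissible c -> cg_coef c j.+1 = 2 -> freeb c j.
Proof.
move=> [_ Had] h2; apply/negPn/negP => /lock_wit [i [hi hi2 hl]].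
have [k [hk hk0]] := Had i j.+1 ltac:(lia) ltac:(lia) hi2 h2.
apply: (hl k) => //; lia.
Qed.

Lemma coef_le2 c i : cg_admissible c -> cg_coef c i <= 2.
Proof.
move=> [/allP Ha _]; rewrite /cg_coef.
case: (ltnP i.-1 (size c)) => h; last by rewrite nth_default.
by apply: Ha; apply: mem_nth.
Qed.

Lemma invariant c k' : cg_admissible c ->
  (forall i, 1 <= i <= k' -> cg_coef c i = 0) ->
  forall t, S c (k' + t) + fib (2 * k' + 1) <=
     (if freeb c (k' + t) then fib (2 * (k' + t) + 1) else fib (2 * (k' + t) + 2)).
Proof.
move=> Hadm H0; elim => [|t IH].
  rewrite addn0.
  have -> : S c k' = S c 0 by apply: S_const => //; move=> i hi; apply: H0; lia.
  have -> : freeb c k' = true.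
    case: k' H0 => // k' H0 /=; by rewrite H0 //; lia.
  rewrite /S big_geq //.
rewrite addnS S_succ.
move: (k' + t) IH => j IH.
have e1 : 2 * j.+1 = (2 * j).+2 by lia.
have e2 : 2 * j.+1 + 1 = (2 * j + 1).+2 by lia.
have e3 : 2 * j.+1 + 2 = (2 * j + 2).+2 by lia.
have e4 : 2 * j + 2 = (2 * j).+2 by lia.
have e5 : 2 * j + 1 = (2 * j).+1 by lia.
have le := coef_le2 c j.+1 Hadm.
rewrite e2 e3 e1 e4 e5 in IH *.
have := @adm_free c j Hadm.
change (freeb c j.+1) with (if cg_coef c j.+1 == 0 then true else if cg_coef c j.+1 == 2 then false else freeb c j).
move: (freeb c j) IH => fj IH Hf.
move: (2 * j) IH => x IH.
have g1 := fibSS x; have g2 := fibSS x.+1; have g3 := fibSS x.+2.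
move: (fib x.+4) (fib x.+3) (fib x.+2) (fib x.+1) (fib x) g1 g2 g3 IH => F4 F3 F2 F1 F0 g1 g2 g3 IH.
case: (cg_coef c j.+1) le Hf => [|[|[|y]]] // le Hf /=.
- case: fj IH {Hf} => IH; lia.
- case: fj IH {Hf} => IH; lia.
- rewrite Hf // in IH; lia.
Qed.

Lemma sumF k' m : \sum_(k'.+1 <= i < k'.+1 + m) fib (2 * i) + fib (2 * k' + 1)
  = fib (2 * (k' + m) + 1).
Proof.
elim: m => [|m IH]; first by rewrite !addn0 big_geq // add0n.
rewrite (addnS k'.+1 m).
have -> : \sum_(k'.+1 <= i < (k'.+1 + m).+1) fib (2 * i) = \sum_(k'.+1 <= i < k'.+1 + m) fib (2 * i) + fib (2 * (k'.+1 + m)) by rewrite big_nat_recr //; lia.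
rewrite (addnS k' m).
have e1 : 2 * (k' + m).+1 + 1 = (2 * (k' + m) + 1).+2 by lia.
have e2 : 2 * (k'.+1 + m) = (2 * (k' + m) + 1).+1 by lia.
rewrite e1 e2 fibSS -IH; lia.
Qed.

Lemma fib2_le i j : 1 <= i -> i <= j -> fib (2 * i) <= fib (2 * j).
Proof.
move=> h1 h2; case: (ltngtP i j) => h; last by subst.
- by apply: ltnW; apply: fib2_lt.
- lia.
Qed.

Lemma in_CG c i : 1 <= i <= size c -> cg_coef c i != 0 -> fib (2 * i) \in CG_set c.
Proof.
move=> hi hc; apply: map_f; rewrite mem_filter hc /= mem_iota; lia.
Qed.

Lemma CG_in c x : x \in CG_set c -> exists i, [/\ 1 <= i, cg_coef c i != 0 & x = fib (2 * i)].
Proof.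
case/mapP => i; rewrite mem_filter mem_iota => /andP [hc hi] ->.
exists i; split => //; lia.
Qed.

Lemma coef_out c i : size c < i -> cg_coef c i = 0.
Proof. move=> h; rewrite /cg_coef nth_default //; lia. Qed.

Definition c0 k' m := nseq k' 0 ++ nseq m 1 ++ [:: 2].

Lemma c0_nth k' m p : nth 0 (c0 k' m) p =
  if p < k' then 0 else if p < k' + m then 1 else if p == k' + m then 2 else 0.
Proof.
rewrite /c0 nth_cat size_nseq; case: ltnP => h1.
  by rewrite nth_nseq h1.
rewrite nth_cat size_nseq; case: ltnP => h2.
  rewrite nth_nseq h2 ifT //; lia.
rewrite ifF; last lia.
case e: (p - k' - m) => [|q] /=.
  rewrite ifT //; lia.
rewrite nth_nil ifF //; lia.
Qed.

Lemma c0_coef k' m i : 1 <= i -> cg_coef (c0 k' m) i =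
  if i <= k' then 0 else if i <= k' + m then 1 else if i == k'.+1 + m then 2 else 0.
Proof.
move=> hi; rewrite /cg_coef c0_nth.
case: i hi => // i _ /=.
Qed.

Lemma size_c0 k' m : size (c0 k' m) = k' + m + 1.
Proof. rewrite /c0 !size_cat !size_nseq /=. lia. Qed.

Lemma S_c0 k' m t : t <= m -> S (c0 k' m) (k' + t) = \sum_(k'.+1 <= i < k'.+1 + t) fib (2 * i).
Proof.
elim: t => [|t IH] ht.
  rewrite !addn0 big_geq //.
  have -> : S (c0 k' m) k' = S (c0 k' m) 0.
    apply: S_const => // i hi; rewrite c0_coef ?ifT //; lia.
  by rewrite /S big_geq.
rewrite addnS S_succ IH; last lia.
rewrite c0_coef; last lia.
rewrite ifF; last lia. rewrite ifT; last lia.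
rewrite mul1n (addnS k'.+1 t).
have -> : \sum_(k'.+1 <= i < (k'.+1 + t).+1) fib (2 * i) = \sum_(k'.+1 <= i < k'.+1 + t) fib (2 * i) + fib (2 * (k'.+1 + t)) by rewrite big_nat_recr //; lia.
by rewrite addSn.
Qed.


Lemma c0_all k' m : all (fun x => x <= 2) (c0 k' m).
Proof.
apply/allP => x; rewrite /c0 !mem_cat !mem_nseq inE.
by case: x => [|[|[|x]]] //; rewrite !andbF.
Qed.

Lemma c0_two k' m i : 1 <= i -> cg_coef (c0 k' m) i = 2 -> i = k'.+1 + m.
Proof.
move=> hi; rewrite c0_coef //.
case: ifP => // _; case: ifP => // _; case: eqP => //.
Qed.

Lemma c0_adm k' m : cg_admissible (c0 k' m).
Proof.
split; first exact: c0_all.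
move=> i j hi hij h1 h2.
have := @c0_two k' m i hi h1; have := @c0_two k' m j ltac:(lia) h2. lia.
Qed.

Lemma c0_val k' m : cg_val (c0 k' m) =
  \sum_(k'.+1 <= i < k'.+1 + m) fib (2 * i) + 2 * fib (2 * k'.+1 + 2 * m).
Proof.
rewrite /cg_val size_c0 -/(S _ _).
have -> : k' + m + 1 = (k' + m).+1 by lia.
rewrite S_succ S_c0 // c0_coef; last lia.
rewrite ifF; last lia. rewrite ifF; last lia. rewrite ifT; last lia.
have -> : 2 * (k' + m).+1 = 2 * k'.+1 + 2 * m by lia.
by [].
Qed.

Lemma c0_min k' m : fib (2 * k'.+1) \in CG_set (c0 k' m).
Proof.
apply: in_CG; first by rewrite size_c0; lia.
rewrite c0_coef //; rewrite ifF; last lia.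
case: ifP => // /negbT h. have -> : (k'.+1 == k'.+1 + m) by apply/eqP; lia. by [].
Qed.

Lemma c0_max k' m : fib (2 * k'.+1 + 2 * m) \in CG_set (c0 k' m).
Proof.
have -> : 2 * k'.+1 + 2 * m = 2 * (k'.+1 + m) by lia.
apply: in_CG; first by rewrite size_c0; lia.
rewrite c0_coef //; rewrite ifF; last lia. rewrite ifF; last lia.
by rewrite eqxx.
Qed.

Lemma c0_min_all k' m : all (fun x => fib (2 * k'.+1) <= x) (CG_set (c0 k' m)).
Proof.
apply/allP => x /CG_in [i [hi hc ->]].
move: hc; rewrite c0_coef //; case: ifP => // h _.
apply: fib2_le => //; lia.
Qed.

Lemma c0_max_all k' m : all (fun x => x <= fib (2 * k'.+1 + 2 * m)) (CG_set (c0 k' m)).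
Proof.
apply/allP => x /CG_in [i [hi hc ->]].
move: hc; rewrite c0_coef //.
have -> : 2 * k'.+1 + 2 * m = 2 * (k'.+1 + m) by lia.
case: ifP => // h1; case: ifP => h2.
  move=> _; apply: fib2_le => //; lia.
case E: (i == k'.+1 + m) => //; by move/eqP: E => ->.
Qed.

Theorem lemma3p1 (k m : nat) (hk : 1 <= k) :
  let N := \sum_(k <= i < k + m) fib (2 * i) + 2 * fib (2 * k + 2 * m) in
  in_A_with_max k m N /\ (forall n, in_A_with_max k m n -> n <= N).
Proof.
case: k hk => // k' _ N.
have key : N + fib (2 * k' + 1) = fib (2 * (k' + m.+1) + 2).
  rewrite /N addnAC sumF.
  have e1 : 2 * (k' + m.+1) + 2 = (2 * (k' + m) + 1).+3 by lia.
  have e2 : 2 * k'.+1 + 2 * m = (2 * (k' + m) + 1).+1 by lia.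
  rewrite e1 e2 !fibSS; lia.
split.
  split.
    rewrite /N; have := fib_pos (2 * k'.+1 + 2 * m).-1.
    have -> : (2 * k'.+1 + 2 * m).-1.+1 = 2 * k'.+1 + 2 * m by lia. lia.
  exists (c0 k' m); split; [split; [exact: c0_adm|by rewrite c0_val]|].
  split; split.
  - by apply: c0_min.
  - by apply: c0_min_all.
  - by apply: c0_max.
  - by apply: c0_max_all.
move=> n [_ [c [[Hadm <-] [[_ Hmin] [_ Hmax]]]]].
have H0 : forall i, 1 <= i <= k' -> cg_coef c i = 0.
  move=> i hi; apply/eqP; apply/negPn/negP => hc.
  case: (leqP i (size c)) => hs; last by rewrite coef_out in hc.
  have := allP Hmin _ (@in_CG c i ltac:(lia) hc).
  have := @fib2_lt i k'.+1 ltac:(lia) ltac:(lia). lia.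
have Hz : forall i, k'.+1 + m < i -> cg_coef c i = 0.
  move=> i hi; apply/eqP; apply/negPn/negP => hc.
  case: (leqP i (size c)) => hs; last by rewrite coef_out in hc.
  have := allP Hmax _ (@in_CG c i ltac:(lia) hc).
  have := @fib2_lt (k'.+1 + m) i ltac:(lia) ltac:(lia).
  have -> : 2 * (k'.+1 + m) = 2 * k'.+1 + 2 * m by lia. lia.
have -> : cg_val c = S c (k' + m.+1).
  rewrite /cg_val -/(S c (size c)).
  rewrite -(@S_const c (size c) (maxn (size c) (k' + m.+1))); last first.
  - move=> i hi; apply: coef_out; lia.
  - lia.
  rewrite (@S_const c (k' + m.+1) (maxn (size c) (k' + m.+1))) //; try lia.
  move=> i hi; apply: Hz; lia.
have := @invariant c k' Hadm H0 m.+1.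
have := fib_le_succ (2 * (k' + m.+1) + 1).
have -> : (2 * (k' + m.+1) + 1).+1 = 2 * (k' + m.+1) + 2 by lia.
case: freeb; lia.
Qed.
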